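(* Let $n\ge2$. Let $Y$ have a continuous distribution function $G$ on $[l_G,r_G]$, and let $g$ be positive, continuous and strictly decreasing on $(l_G,r_G)$ with $\lim_{y\to r_G^-}g(y)=0$; put $\tau=\lim_{y\to l_G^+}[g(y)]^{-2}$. Then \[ E[g(Y(n))\mid Y(n-1)=s,\ Y(n+1)=t]=\frac{2g(s)g(t)}{g(s)+g(t)}\qquad (l_G<s<t<r_G) \] holds if and only if $G(y)=1-\exp\{-c([g(y)]^{-2}-\tau)\}$ for $l_G<y<r_G$, for some constant $c>0$.
   Context: $Y_1,Y_2,\dots$ are i.i.d. copies of $Y$ with distribution function $G$; $l_G=\inf\{y:G(y)>0\}$, $r_G=\sup\{y:G(y)<1\}$. Upper record times $L(1)=1$, $L(m)=\min\{j>L(m-1):Y_j>Y_{L(m-1)}\}$, record values $Y(m)=Y_{L(m)}$. With $R(y)=-\ln(1-G(y))$, conditional expectations given $Y(n-1)=s$, $Y(n+1)=t$ use the conditional density of $Y(n)$: $\frac{R'(x)}{R(t)-R(s)}$, $s<x<t$. *)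

(* Defs.v *)
From Stdlib Require Import Reals.
Open Scope R_scope.

Definition cont_distribution (G : R -> R) : Prop :=
  (forall x y, x <= y -> G x <= G y) /\
  continuity G /\
  (forall eps, 0 < eps -> exists M, forall x, x <= M -> Rabs (G x) < eps) /\
  (forall eps, 0 < eps -> exists M, forall x, M <= x -> Rabs (G x - 1) < eps).

(* For a continuous distribution function G, y lies in the open interval
   (l_G, r_G) iff 0 < G y < 1  (l_G = inf{G>0}, r_G = sup{G<1}); this
   also covers the cases l_G = -oo, r_G = +oo. *)
Definition inside (G : R -> R) (y : R) : Prop := 0 < G y /\ G y < 1.

Definition Rfun (G : R -> R) (y : R) : R := - ln (1 - G y).

Fixpoint RS_sum (f F : R -> R) (p xi : nat -> R) (n : nat) : R :=
  match n with
  | O => 0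
  | S k => RS_sum f F p xi k + f (xi k) * (F (p (S k)) - F (p k))
  end.

Definition is_RS_integral (f F : R -> R) (a b I : R) : Prop :=
  forall eps, 0 < eps -> exists delta, 0 < delta /\
    forall (n : nat) (p xi : nat -> R),
      p 0%nat = a -> p n = b ->
      (forall i, (i < n)%nat ->
         p i <= xi i <= p (S i) /\ p (S i) - p i < delta) ->
      Rabs (RS_sum f F p xi n - I) < eps.

(* E[g(Y(n)) | Y(n-1)=s, Y(n+1)=t] = v, where the conditional law of Y(n)
   is dR(x)/(R(t)-R(s)) on (s,t) (density R'(x)/(R(t)-R(s)) when R is
   differentiable). *)
Definition cond_exp_record (G g : R -> R) (s t v : R) : Prop :=
  exists I, is_RS_integral g (Rfun G) s t I /\
            v = I / (Rfun G t - Rfun G s).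

(* Main.v *)
Require Import Defs.
From Stdlib Require Import Reals Lra Lia Psatz Classical.
Open Scope R_scope.

Lemma G_nonneg G : cont_distribution G -> forall x, 0 <= G x.
Proof.
  intros [Hm [Hc [Hl Hr]]] x.
  destruct (Rle_lt_dec 0 (G x)) as [h|h]; auto.
  destruct (Hl (- G x)) as [M HM]; [lra|].
  assert (H1 := HM (Rmin M x) (Rmin_l _ _)).
  assert (H2 := Hm (Rmin M x) x (Rmin_r _ _)).
  rewrite Rabs_left in H1; lra.
Qed.

Lemma inside_between G x m y : cont_distribution G -> inside G x -> inside G y ->
  x <= m -> m <= y -> inside G m.
Proof.
  intros [Hm _] [a b] [c d] h1 h2. split.
  - apply Rlt_le_trans with (G x); auto.
  - apply Rle_lt_trans with (G y); auto.
Qed.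

Lemma ln_le' x y : 0 < x -> x <= y -> ln x <= ln y.
Proof. intros h1 [h|h]. left; apply ln_increasing; auto. subst; lra. Qed.

Lemma R_mono G x y : cont_distribution G -> inside G x -> inside G y -> x <= y ->
  Rfun G x <= Rfun G y.
Proof.
  intros HG Hx Hy h. unfold Rfun. destruct HG as [Hm _].
  assert (G x <= G y) by auto. destruct Hx, Hy.
  assert (ln (1 - G y) <= ln (1 - G x)) by (apply ln_le'; lra). lra.
Qed.

Definition good (d a b : R) (n : nat) (p : nat -> R) : Prop :=
  p 0%nat = a /\ p n = b /\ forall i, (i < n)%nat -> p i <= p i <= p (S i) /\ p (S i) - p i < d.

Lemma RS_sum_ext f F p p' xi xi' n :
  (forall i, (i <= n)%nat -> p i = p' i) -> (forall i, (i < n)%nat -> xi i = xi' i) ->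
  RS_sum f F p xi n = RS_sum f F p' xi' n.
Proof.
  induction n; intros h1 h2; simpl; auto.
  rewrite IHn by (intros; apply h1 || apply h2; lia).
  rewrite (h1 n), (h1 (S n)), (h2 n) by lia. auto.
Qed.

Lemma RS_sum_shift f F p xi N k :
  RS_sum f F p xi (N + k) = RS_sum f F p xi N +
    RS_sum f F (fun i => p (N + i)%nat) (fun i => xi (N + i)%nat) k.
Proof.
  induction k; simpl.
  - rewrite Nat.add_0_r; lra.
  - rewrite Nat.add_succ_r. simpl. rewrite IHk. lra.
Qed.

Lemma uniform_good a b d : a <= b -> 0 < d -> exists n p, good d a b n p.
Proof.
  intros hab hd.
  destruct (archimed_cor1 (d / (b - a + 1))) as [N [HN HN0]].
  { apply Rdiv_lt_0_compat; lra. }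
  assert (HNp : 0 < INR N) by (apply lt_0_INR; lia).
  exists N, (fun i => a + INR i * ((b - a) / INR N)).
  split; [|split].
  - simpl. lra.
  - field. lra.
  - intros i _. rewrite S_INR.
    assert (0 <= (b - a) / INR N) by (apply Rmult_le_pos; [lra|left; apply Rinv_0_lt_compat; lra]).
    split; [lra|].
    replace (a + (INR i + 1) * ((b - a) / INR N) - (a + INR i * ((b - a) / INR N)))
      with ((b - a) * / INR N) by (field; lra).
    apply Rle_lt_trans with ((b-a) * (d / (b - a + 1))).
    + apply Rmult_le_compat_l; lra.
    + apply Rlt_le_trans with ((b - a + 1) * (d / (b - a + 1))).
      * apply Rmult_lt_compat_r; [apply Rdiv_lt_0_compat|]; lra.
      * right; field; lra.
Qed.

Definition concat (n1 : nat) (p1 p2 : nat -> R) (i : nat) : R :=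
  if Nat.leb i n1 then p1 i else p2 (i - n1)%nat.

Lemma concat_good f F d a m b n1 n2 p1 p2 :
  good d a m n1 p1 -> good d m b n2 p2 ->
  good d a b (n1 + n2) (concat n1 p1 p2) /\
  RS_sum f F (concat n1 p1 p2) (concat n1 p1 p2) (n1 + n2) =
  RS_sum f F p1 p1 n1 + RS_sum f F p2 p2 n2.
Proof.
  intros [a1 [b1 c1]] [a2 [b2 c2]].
  assert (E0 : forall i, concat n1 p1 p2 (n1 + i)%nat = p2 i).
  { intros i. unfold concat. destruct (Nat.leb_spec (n1 + i) n1).
    - assert (i = 0%nat) by lia. subst. rewrite Nat.add_0_r. congruence.
    - f_equal. lia. }
  assert (E1 : forall i, (i <= n1)%nat -> concat n1 p1 p2 i = p1 i).
  { intros i hi. unfold concat. destruct (Nat.leb_spec i n1); auto; lia. }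
  split; [split; [|split]|].
  - rewrite E1 by lia. auto.
  - rewrite E0. auto.
  - intros i hi. destruct (Nat.lt_ge_cases i n1) as [h|h].
    + rewrite !E1 by lia. apply c1; auto.
    + replace i with (n1 + (i - n1))%nat by lia.
      rewrite <- Nat.add_succ_r, !E0. apply c2. lia.
  - rewrite RS_sum_shift. f_equal.
    + apply RS_sum_ext; intros; apply E1; lia.
    + apply RS_sum_ext; intros; apply E0.
Qed.

Lemma small_zero x : (forall eps, 0 < eps -> Rabs x < eps) -> x = 0.
Proof.
  intros h. destruct (Req_dec x 0) as [e|e]; auto.
  assert (Rabs x > 0) by (apply Rabs_pos_lt; auto).
  specialize (h (Rabs x) H). lra.
Qed.

Lemma RS_add f F a m b I1 I2 I : a <= m -> m <= b ->
  is_RS_integral f F a m I1 -> is_RS_integral f F m b I2 -> is_RS_integral f F a b I ->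
  I = I1 + I2.
Proof.
  intros h1 h2 H1 H2 H.
  assert (I - (I1 + I2) = 0); [|lra].
  apply small_zero. intros eps he.
  destruct (H1 (eps/3)) as [d1 [hd1 K1]]; [lra|].
  destruct (H2 (eps/3)) as [d2 [hd2 K2]]; [lra|].
  destruct (H (eps/3)) as [d [hd K]]; [lra|].
  set (e := Rmin d (Rmin d1 d2)).
  assert (he1 : e <= d) by apply Rmin_l.
  assert (he2 : e <= d1) by (eapply Rle_trans; [apply Rmin_r|apply Rmin_l]).
  assert (he3 : e <= d2) by (eapply Rle_trans; [apply Rmin_r|apply Rmin_r]).
  assert (hep : 0 < e) by (unfold e; repeat apply Rmin_glb_lt; auto).
  destruct (uniform_good a m e h1 hep) as [n1 [p1 G1]].
  destruct (uniform_good m b e h2 hep) as [n2 [p2 G2]].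
  destruct (concat_good f F e a m b n1 n2 p1 p2 G1 G2) as [G3 E].
  assert (W : forall d' a' b' n p, e <= d' -> good e a' b' n p ->
     p 0%nat = a' /\ p n = b' /\ forall i, (i < n)%nat -> p i <= p i <= p (S i) /\ p (S i) - p i < d').
  { intros d' a' b' n p hh [x [y z]]. split; auto. split; auto. intros i hi.
    destruct (z i hi). split; auto; lra. }
  destruct (W _ _ _ _ _ he2 G1) as [x1 [y1 z1]].
  destruct (W _ _ _ _ _ he3 G2) as [x2 [y2 z2]].
  destruct (W _ _ _ _ _ he1 G3) as [x3 [y3 z3]].
  specialize (K1 n1 p1 p1 x1 y1 z1).
  specialize (K2 n2 p2 p2 x2 y2 z2).
  specialize (K _ _ _ x3 y3 z3).
  rewrite E in K.
  revert K1 K2 K. unfold Rabs. repeat destruct Rcase_abs; lra.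
Qed.

Lemma alg gs gm gt A B : gs > 0 -> gm > 0 -> gt > 0 ->
  2*gs*gt/(gs+gt)*(A+B) = 2*gs*gm/(gs+gm)*A + 2*gm*gt/(gm+gt)*B ->
  (A*(/ (gt^2) - / (gm^2)) = B*(/ (gm^2) - / (gs^2))).
Proof.
  intros h1 h2 h3 E.
  assert (A*(/ (gt^2) - / (gm^2)) - B*(/ (gm^2) - / (gs^2)) =
     -(/gs+/gt)*(/gs+/gm)*(/gm+/gt)/2 *
     (2*gs*gt/(gs+gt)*(A+B) - (2*gs*gm/(gs+gm)*A + 2*gm*gt/(gm+gt)*B))) as K.
  { field. repeat split; lra. }
  rewrite E, Rminus_diag, Rmult_0_r in K. lra.
Qed.

Lemma lin (P : R -> Prop) (Rf w : R -> R) a b :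
  (forall x y z, P x -> P y -> P z -> x < y -> y < z ->
     (Rf y - Rf x)*(w z - w y) = (Rf z - Rf y)*(w y - w x)) ->
  (forall x y, P x -> P y -> x < y -> w x < w y) -> P a -> P b -> a < b ->
  forall y, P y -> Rf y = (Rf b - Rf a)/(w b - w a) * w y + (Rf a - (Rf b - Rf a)/(w b - w a) * w a).
Proof.
  intros H3 Hw Pa Pb hab y Py.
  assert (hw := Hw a b Pa Pb hab).
  assert (N : (Rf y - Rf a)*(w b - w a) - (Rf b - Rf a)*(w y - w a) = 0).
  { destruct (Rtotal_order y a) as [h|[h|h]].
    - specialize (H3 y a b Py Pa Pb h hab). nra.
    - subst; ring.
    - destruct (Rtotal_order y b) as [h'|[h'|h']].
      + specialize (H3 a y b Pa Py Pb h h'). nra.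
      + subst; ring.
      + specialize (H3 a b y Pa Pb Py hab h'). nra. }
  assert (Rf y - ((Rf b - Rf a)/(w b - w a) * w y + (Rf a - (Rf b - Rf a)/(w b - w a) * w a))
    = ((Rf y - Rf a)*(w b - w a) - (Rf b - Rf a)*(w y - w a)) / (w b - w a)) as K.
  { field. lra. }
  rewrite N in K. unfold Rdiv in K. rewrite Rmult_0_l in K. lra.
Qed.

Lemma exists_small G y0 eta : cont_distribution G -> inside G y0 -> 0 < eta ->
  exists y, inside G y /\ y < y0 /\ G y < eta.
Proof.
  intros HG Hy0 he. assert (HG' := HG). destruct HG' as [Hm [Hc [Hl Hr]]].
  destruct Hy0 as [h1 h2].
  set (e := Rmin eta (G y0) / 2).
  assert (e1 : Rmin eta (G y0) <= eta) by apply Rmin_l.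
  assert (e2 : Rmin eta (G y0) <= G y0) by apply Rmin_r.
  assert (e3 : 0 < Rmin eta (G y0)) by (apply Rmin_glb_lt; lra).
  destruct (Hl e) as [M HM]; [unfold e; lra|].
  set (x := Rmin M (y0 - 1)).
  assert (hx := HM x (Rmin_l _ _)).
  assert (hx2 : x <= y0 - 1) by apply Rmin_r.
  assert (hx0 := G_nonneg G HG x).
  rewrite Rabs_right in hx by lra.
  destruct hx0 as [hp|hz].
  - exists x. split; [split|split]; unfold e in *; lra.
  - destruct (IVT (fun z => G z - e) x y0) as [z [[hz1 hz2] hz3]].
    + apply continuity_minus; auto. apply continuity_const. intros ? ?; auto.
    + lra.
    + rewrite <- hz. unfold e; lra.
    + unfold e; lra.
    + assert (G z = e) by lra. exists z. destruct hz2 as [hz2|hz2].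
      * split; [split|split]; unfold e in *; lra.
      * subst z. unfold e in *; lra.
Qed.

Lemma forward (G g : R -> R) (tau : R) :
  cont_distribution G ->
  (forall y, inside G y -> 0 < g y) ->
  (forall x y, inside G x -> inside G y -> x < y -> g y < g x) ->
  (forall eps, 0 < eps -> exists y0, inside G y0 /\
     forall y, inside G y -> y < y0 -> Rabs (/ (g y ^ 2) - tau) < eps) ->
  (forall s t, inside G s -> inside G t -> s < t ->
      cond_exp_record G g s t (2 * g s * g t / (g s + g t))) ->
  exists c, 0 < c /\
      forall y, inside G y -> G y = 1 - exp (- (c * (/ (g y ^ 2) - tau))).
Proof.
  intros HG Hpos Hdec Htau Hce.
  set (w := fun y => / (g y ^ 2)).
  assert (Hw : forall x y, inside G x -> inside G y -> x < y -> w x < w y).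
  { intros x y hx hy hxy. unfold w. assert (h1 := Hpos x hx). assert (h2 := Hpos y hy).
    assert (h3 := Hdec x y hx hy hxy).
    apply Rinv_lt_contravar. apply Rmult_lt_0_compat; apply pow_lt; lra.
    simpl. nra. }
  assert (key : forall s t, inside G s -> inside G t -> s < t ->
     exists I, is_RS_integral g (Rfun G) s t I /\
       I = 2 * g s * g t / (g s + g t) * (Rfun G t - Rfun G s) /\ Rfun G s < Rfun G t).
  { intros s t hs ht hst. destruct (Hce s t hs ht hst) as [I [HI HE]].
    assert (hm := R_mono G s t HG hs ht (Rlt_le _ _ hst)).
    assert (hp : 0 < 2 * g s * g t / (g s + g t)).
    { assert (h1 := Hpos s hs). assert (h2 := Hpos t ht).
      apply Rdiv_lt_0_compat; [|lra]. apply Rmult_lt_0_compat; [lra|auto]. }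
    destruct hm as [hm|hm].
    - exists I. split; auto. split; auto. rewrite HE. field. lra.
    - rewrite hm, Rminus_diag in HE. unfold Rdiv in HE. rewrite Rinv_0, Rmult_0_r in HE. lra. }
  assert (H3 : forall x y z, inside G x -> inside G y -> inside G z -> x < y -> y < z ->
     (Rfun G y - Rfun G x)*(w z - w y) = (Rfun G z - Rfun G y)*(w y - w x)).
  { intros x y z hx hy hz hxy hyz.
    destruct (key x y hx hy hxy) as [I1 [K1 [E1 _]]].
    destruct (key y z hy hz hyz) as [I2 [K2 [E2 _]]].
    destruct (key x z hx hz (Rlt_trans _ _ _ hxy hyz)) as [I [K [E _]]].
    assert (EI := RS_add _ _ _ _ _ _ _ _ (Rlt_le _ _ hxy) (Rlt_le _ _ hyz) K1 K2 K).
    unfold w. apply alg; try (apply Hpos; auto).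
    rewrite <- E1, <- E2. replace (Rfun G y - Rfun G x + (Rfun G z - Rfun G y)) with
      (Rfun G z - Rfun G x) by ring. rewrite <- E. auto. }
  destruct (Htau 1) as [y0 [Hy0 _]]; [lra|].
  destruct (exists_small G y0 1 HG Hy0) as [a [Ha [hay0 _]]]; [lra|].
  assert (L := lin (inside G) (Rfun G) w a y0 H3 Hw Ha Hy0 hay0).
  set (c := (Rfun G y0 - Rfun G a) / (w y0 - w a)) in L.
  set (d := Rfun G a - c * w a) in L.
  assert (hc : 0 < c).
  { destruct (key a y0 Ha Hy0 hay0) as [I0 [_ [_ h]]]. assert (h2 := Hw a y0 Ha Hy0 hay0).
    unfold c. apply Rdiv_lt_0_compat; lra. }
  assert (hd : d + c * tau = 0).
  { apply small_zero. intros eps he.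
    destruct (Htau (eps / (2 * c))) as [y1 [Hy1 K]].
    { apply Rdiv_lt_0_compat; lra. }
    assert (hex : exp (- (eps/2)) < 1).
    { rewrite <- exp_0. apply exp_increasing. lra. }
    destruct (exists_small G y1 (1 - exp (- (eps/2))) HG Hy1) as [y [Hy [hyy1 hGy]]]; [lra|].
    specialize (K y Hy hyy1). specialize (L y Hy).
    assert (hR : 0 <= Rfun G y < eps / 2).
    { destruct Hy as [hy1 hy2]. unfold Rfun. split.
      - assert (ln (1 - G y) <= ln 1) by (apply ln_le'; lra). rewrite ln_1 in H. lra.
      - assert (ln (exp (- (eps/2))) < ln (1 - G y)).
        { apply ln_increasing. apply exp_pos. lra. }
        rewrite ln_exp in H. lra. }
    replace (d + c * tau) with (Rfun G y - c * (w y - tau)) by (rewrite L; ring).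
    assert (Rabs (c * (w y - tau)) < eps / 2).
    { rewrite Rabs_mult, Rabs_right by lra. unfold w.
      apply Rlt_le_trans with (c * (eps / (2 * c))).
      - apply Rmult_lt_compat_l; auto.
      - right; field; lra. }
    revert H hR. generalize (c * (w y - tau)). intros r. unfold Rabs.
    repeat destruct Rcase_abs; lra. }
  exists c. split; auto. intros y Hy.
  specialize (L y Hy). fold c d in L.
  assert (E : Rfun G y = c * (/ (g y ^ 2) - tau)).
  { rewrite L. fold (w y). nra. }
  unfold Rfun in E. destruct Hy.
  rewrite <- E, Ropp_involutive, exp_ln by lra. ring.
Qed.

Lemma step_alg c us eta gx a b : 0 < c -> 0 < us -> us <= b -> b <= a -> a - b < eta ->
  0 < gx -> 1 <= gx * a -> gx * b <= 1 ->
  Rabs (gx * (c * (a^2 - b^2)) - 2 * c * (a - b)) <= c * eta / us * (a - b).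
Proof.
  intros hc hus hb hab he hg h1 h2.
  assert (hgb : gx <= / us).
  { apply Rmult_le_reg_r with us; auto. rewrite Rinv_l by lra. nra. }
  assert (E : gx * (c * (a^2 - b^2)) - 2 * c * (a - b) = c * (a - b) * (gx * (a + b) - 2)) by ring.
  rewrite E, Rabs_mult, Rabs_right by nra.
  assert (Rabs (gx * (a + b) - 2) <= gx * (a - b)).
  { apply Rabs_le. nra. }
  assert (gx * (a - b) <= eta / us).
  { unfold Rdiv. apply Rle_trans with (/ us * (a - b)). nra.
    rewrite Rmult_comm. apply Rmult_le_compat_r. left; apply Rinv_0_lt_compat; auto. lra. }
  assert (0 <= c * (a - b)) by nra.
  replace (c * eta / us * (a - b)) with (c * (a - b) * (eta / us)) by (field; lra).
  apply Rmult_le_compat_l; auto. lra.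
Qed.

Lemma p_mono (p xi : nat -> R) n : (forall i, (i < n)%nat -> p i <= xi i <= p (S i)) ->
  forall i j, (i <= j)%nat -> (j <= n)%nat -> p i <= p j.
Proof.
  intros H i j hij. induction hij; intros hj. lra.
  assert (p m <= p (S m)) by (destruct (H m); [lia|lra]). specialize (IHhij ltac:(lia)). lra.
Qed.

Lemma backward (G g : R -> R) (tau c : R) :
  cont_distribution G ->
  (forall y, inside G y -> 0 < g y) ->
  (forall y, inside G y -> continuity_pt g y) ->
  (forall x y, inside G x -> inside G y -> x < y -> g y < g x) ->
  0 < c ->
  (forall y, inside G y -> G y = 1 - exp (- (c * (/ (g y ^ 2) - tau)))) ->
  forall s t, inside G s -> inside G t -> s < t ->
      cond_exp_record G g s t (2 * g s * g t / (g s + g t)).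
Proof.
  intros HG Hpos Hcont Hdec hc HGf s t hs ht hst.
  set (u := fun y => / g y).
  assert (HR : forall y, inside G y -> Rfun G y = c * (u y ^ 2 - tau)).
  { intros y hy. unfold Rfun, u. rewrite (HGf y hy).
    replace (1 - (1 - exp (- (c * (/ g y ^ 2 - tau))))) with (exp (- (c * (/ g y ^ 2 - tau)))) by ring.
    rewrite ln_exp. assert (0 < g y) by auto. field. lra. }
  assert (Hin : forall x, s <= x <= t -> inside G x).
  { intros x [h1 h2]. apply inside_between with s t; auto. }
  assert (Hu : forall x y, s <= x <= t -> s <= y <= t -> x <= y -> u x <= u y).
  { intros x y hx hy [h|h]; [|subst; lra]. unfold u.
    assert (h1 := Hpos x (Hin x hx)). assert (h2 := Hpos y (Hin y hy)).
    left. apply Rinv_lt_contravar. nra. apply Hdec; auto. }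
  assert (Hg : forall x y, s <= x <= t -> s <= y <= t -> x <= y -> g y <= g x).
  { intros x y hx hy [h|h]; [|subst; lra]. left; apply Hdec; auto. }
  assert (gs := Hpos s hs). assert (gt := Hpos t ht).
  assert (hgst := Hdec s t hs ht hst).
  exists (2 * c * (u t - u s)). split.
  2:{ rewrite (HR s hs), (HR t ht). unfold u. field.
      repeat split; try lra. intro h.
      assert (g s ^ 2 - g t ^2 = 0) by nra. nra. }
  intros eps he.
  assert (hus : 0 < u s) by (unfold u; apply Rinv_0_lt_compat; auto).
  assert (hB : u s < u t) by (unfold u; apply Rinv_lt_contravar; nra).
  set (eta := eps * u s / (2 * c * (u t - u s + 1))).
  assert (heta : 0 < eta) by (unfold eta; apply Rdiv_lt_0_compat; nra).
  assert (UC := Heine u (fun x => s <= x <= t) (compact_P3 s t)).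
  destruct UC with (eps := mkposreal eta heta) as [delta Hd].
  { intros x hx. unfold u. apply continuity_pt_inv. apply Hcont; auto.
    assert (0 < g x) by auto. lra. }
  exists delta. split; [apply cond_pos|].
  intros n p xi hp0 hpn Hpx.
  assert (Hxi : forall i, (i < n)%nat -> p i <= xi i <= p (S i)) by (intros i hi; apply Hpx; auto).
  assert (Hm := p_mono p xi n Hxi).
  assert (Hrange : forall i, (i <= n)%nat -> s <= p i <= t).
  { intros i hi. rewrite <- hp0, <- hpn. split; apply Hm; lia. }
  assert (IND : forall k, (k <= n)%nat ->
     Rabs (RS_sum g (Rfun G) p xi k - 2 * c * (u (p k) - u s)) <= c * eta / u s * (u (p k) - u s)).
  { induction k; intros hk.
    - simpl. rewrite hp0. replace (0 - 2 * c * (u s - u s)) with 0 by ring.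
      rewrite Rabs_R0. right; ring.
    - simpl. specialize (IHk ltac:(lia)).
      assert (r1 := Hrange k ltac:(lia)). assert (r2 := Hrange (S k) ltac:(lia)).
      destruct (Hpx k ltac:(lia)) as [[x1 x2] x3].
      assert (rx : s <= xi k <= t) by lra.
      rewrite (HR _ (Hin _ r1)), (HR _ (Hin _ r2)).
      replace (c * (u (p (S k)) ^ 2 - tau) - c * (u (p k) ^ 2 - tau)) with
        (c * (u (p (S k)) ^ 2 - u (p k) ^ 2)) by ring.
      assert (St : Rabs (g (xi k) * (c * (u (p (S k)) ^ 2 - u (p k) ^ 2)) - 2 * c * (u (p (S k)) - u (p k)))
                <= c * eta / u s * (u (p (S k)) - u (p k))).
      { assert (g1 := Hg _ _ rx r2 x2). assert (g2 := Hg _ _ r1 rx x1).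
        assert (gp1 := Hpos _ (Hin _ r2)). assert (gp2 := Hpos _ (Hin _ r1)).
        assert (gpx := Hpos _ (Hin _ rx)).
        assert (a1 : u s <= u (p k)) by (apply Hu; repeat split; lra).
        assert (a2 : u (p k) <= u (p (S k))) by (apply Hu; repeat split; lra).
        assert (a3 : u (p (S k)) - u (p k) < eta).
        { assert (Rabs (u (p (S k)) - u (p k)) < eta).
          { apply (Hd (p (S k)) (p k)); auto. rewrite Rabs_right; lra. }
          apply Rabs_def2 in H. lra. }
        assert (a4 : 1 <= g (xi k) * u (p (S k))).
        { unfold u. apply Rmult_le_reg_r with (g (p (S k))); auto.
          rewrite Rmult_assoc, Rinv_l; lra. }
        assert (a5 : g (xi k) * u (p k) <= 1).
        { unfold u. apply Rmult_le_reg_r with (g (p k)); auto.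
          rewrite Rmult_assoc, Rinv_l; lra. }
        apply step_alg; auto. }
      set (A := RS_sum g (Rfun G) p xi k) in *.
      set (T := g (xi k) * (c * (u (p (S k)) ^ 2 - u (p k) ^ 2))) in *.
      replace (A + T - 2 * c * (u (p (S k)) - u s)) with
        ((A - 2 * c * (u (p k) - u s)) + (T - 2 * c * (u (p (S k)) - u (p k)))) by ring.
      eapply Rle_trans. apply Rabs_triang.
      replace (c * eta / u s * (u (p (S k)) - u s)) with
        (c * eta / u s * (u (p k) - u s) + c * eta / u s * (u (p (S k)) - u (p k))) by ring.
      lra. }
  specialize (IND n (Nat.le_refl n)). rewrite hpn in IND.
  eapply Rle_lt_trans. apply IND.
  unfold eta.
  replace (c * (eps * u s / (2 * c * (u t - u s + 1))) / u s * (u t - u s)) with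
    (eps * ((u t - u s) / (2 * (u t - u s + 1)))) by (field; repeat split; lra).
  assert ((u t - u s) / (2 * (u t - u s + 1)) < 1).
  { apply Rmult_lt_reg_r with (2 * (u t - u s + 1)); [lra|].
    unfold Rdiv. rewrite Rmult_assoc, Rinv_l by lra. lra. }
  nra.
Qed.

Theorem corollary3 (n : nat) (G g : R -> R) (tau : R) :
  (2 <= n)%nat ->
  cont_distribution G ->
  (* g positive, continuous, strictly decreasing on (l_G, r_G) *)
  (forall y, inside G y -> 0 < g y) ->
  (forall y, inside G y -> continuity_pt g y) ->
  (forall x y, inside G x -> inside G y -> x < y -> g y < g x) ->
  (* lim_{y -> r_G^-} g(y) = 0 *)
  (forall eps, 0 < eps -> exists y0, inside G y0 /\
     forall y, inside G y -> y0 < y -> Rabs (g y) < eps) ->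
  (* tau = lim_{y -> l_G^+} g(y)^(-2) *)
  (forall eps, 0 < eps -> exists y0, inside G y0 /\
     forall y, inside G y -> y < y0 -> Rabs (/ (g y ^ 2) - tau) < eps) ->
  ((forall s t, inside G s -> inside G t -> s < t ->
      cond_exp_record G g s t (2 * g s * g t / (g s + g t)))
   <->
   (exists c, 0 < c /\
      forall y, inside G y -> G y = 1 - exp (- (c * (/ (g y ^ 2) - tau))))).
Proof.
  intros _ HG Hpos Hcont Hdec _ Htau. split.
  - apply forward; auto.
  - intros [c [hc Hf]]. apply (backward G g tau c); auto.
Qed.
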